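(* Let $\mathbf{P}$ be a probability distribution on $\mathbb{R}^D$ whose samples lie in a bounded box $\prod_{d=1}^D[\lambda,\mu]$, and let $U>0$. Fix $0<a<b$ and a latent dimension $K$, and let $\mathcal{C}^\dagger_{\mathbf{P},\frac12 U}$ be the set of Spectrum VAEs $(\phi,\theta)$ (with these $a,b,K$) that are essentially compatible with $\mathbf{P}$ given $\frac12 U$. Define $$\mathrm{MDL}^\dagger_U=\inf_{(\phi,\theta)\in\mathcal{C}^\dagger_{\mathbf{P},\frac12U}}\log_2\Big(\sum_{m=1}^M|\mathcal{P}_m|_{\frac12U}\Big),$$ where, for each $(\phi,\theta)$, $\mathcal{P}_1,\dots,\mathcal{P}_M$ are all the spiking patterns of spectra $\phi(\mathbf{x})$ with $\mathbf{x}$ drawn from $\mathbf{P}$, and $|\mathcal{P}_m|_{\frac12U}$ is the $\frac12U$-complexity of $\mathcal{P}_m$ with respect to $\theta$. Then $\mathrm{MDL}^\dagger_U\ge\log_2(\mathcal{E}_{\mathbf{P},U})$, where $\mathcal{E}_{\mathbf{P},U}$ is the $U$-essence of $\mathbf{P}$.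
   Context: Spectrum VAE: given $0<a<b$, an encoder $\phi:\mathbb{R}^D\to\mathbb{R}^K$ first computes $\mathbf{z}_{\mathrm{pre}}\in\mathbb{R}^K$ and then sets, coordinatewise, $z_k=z_{\mathrm{pre},k}$ if $a\le z_{\mathrm{pre},k}\le b$, $z_k=b$ if $z_{\mathrm{pre},k}>b$, and $z_k=0$ if $z_{\mathrm{pre},k}<a$; the output $\mathbf{z}=\phi(\mathbf{x})$ is called a spectrum, so each $z_k\in\{0\}\cup[a,b]$. A decoder $\theta:\mathbb{R}^K\to\mathbb{R}^D$ produces $\tilde{\mathbf{x}}=\theta(\mathbf{z})$; distances are Euclidean $\|\cdot\|_2$. The spiking pattern of a spectrum $\mathbf{z}$ is the set $\{k: z_k\ge a\}$ (which is $\emptyset$ if $\mathbf{z}=0$). Patterns and robustness: a pattern is a set $\mathcal{P}=\{k_1,\dots,k_L\}\subseteq\{1,\dots,K\}$. A spectrum preserved by $\mathcal{P}$ is any $\mathbf{z}\in\mathbb{R}^K$ with $z_{k_l}\in[a,b]$ for $l=1,\dots,L$ and all other coordinates zero (for $\mathcal{P}=\emptyset$ this is only the zero vector). Given $\alpha_{k_1},\dots,\alpha_{k_L}>0$ and perturbations $\epsilon_{k_l}\in[-\alpha_{k_l},\alpha_{k_l}]$ (i.e. in the support of $\mathcal{U}(-\alpha_{k_l},\alpha_{k_l})$), the perturbed spectrum $\tilde{\mathbf{z}}$ has $\tilde z_{k_l}=\min(b,\max(a,z_{k_l}+\epsilon_{k_l}))$ and zero elsewhere. The decoder $\theta$ is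 $U$-robust w.r.t. $\mathcal{P}$ with the ($U$-qualified) boundaries $\{\alpha_{k_l}\}$ if $\|\theta(\mathbf{z})-\theta(\tilde{\mathbf{z}})\|_2\le U$ for every spectrum $\mathbf{z}$ preserved by $\mathcal{P}$ and every such perturbation. For such boundaries let $Q_{k_l}$ be the smallest integer larger than $(b-a)/(2\alpha_{k_l})$; divide $[a,b]$ in coordinate $k_l$ into $Q_{k_l}$ equal pieces and use their midpoints as quantization scales; the $U$-representation set is the set of the $\prod_{l=1}^LQ_{k_l}$ spectra preserved by $\mathcal{P}$ whose $k_l$-coordinates are quantization scales (size $1$ for $\mathcal{P}=\emptyset$). The $U$-complexity $|\mathcal{P}|_U$ is the minimum size of a $U$-representation set over all $U$-qualified choices of boundaries, and $|\mathcal{P}|_U=\infty$ if $\theta$ is not $U$-robust w.r.t. $\mathcal{P}$ for any boundaries. Essential compatibility: $(\phi,\theta)$ is essentially compatible with $\mathbf{P}$ given $U'$ if every sample $\mathbf{x}$ drawn from $\mathbf{P}$ satisfies $\|\mathbf{x}-\theta(\phi(\mathbf{x}))\|_2\le U'$. $U$-essence: $\mathcal{E}_{\mathbf{P},U}$ is the minimum cardinality of a finite set $S\subset\mathbb{R}^D$ such that every sample $\mathbf{x}$ drawn from $\mathbf{P}$ has some $\hat{\mathbf{x}}\in S$ with $\|\mathbf{x}-\hat{\mathbf{x}}\|_2\le U$. *)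

(* Defs.v *)
From HB Require Import structures.
From mathcomp Require Import all_boot all_order all_algebra.
From mathcomp Require Import finmap.
From mathcomp Require Import all_classical all_reals all_analysis.
Set Implicit Arguments. Unset Strict Implicit. Unset Printing Implicit Defensive.
Import Order.TTheory GRing.Theory Num.Theory.
Local Open Scope classical_set_scope.
Local Open Scope ring_scope.

Section SpectrumVAE.
Variable R : realType.

Definition enorm (n : nat) (v : 'rV[R]_n) : R :=
  Num.sqrt (\sum_(i < n) v ord0 i ^+ 2).

Definition log2e (x : \bar R) : \bar R :=
  match x with
  | r%:E => if r <= 0 then -oo%E else (ln r / ln 2)%:E
  | +oo%E => +oo%E
  | -oo%E => -oo%E
  end.

Variables (D K : nat) (a b : R).

Definition clamp_coord (t : R) : R :=
  if t < a then 0 else if b < t then b else t.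

Definition spectrum_of (zpre : 'rV[R]_K) : 'rV[R]_K :=
  \row_k clamp_coord (zpre ord0 k).

Definition encoder (phi_pre : 'rV[R]_D -> 'rV[R]_K) (x : 'rV[R]_D) : 'rV[R]_K :=
  spectrum_of (phi_pre x).

Definition spiking_pattern (z : 'rV[R]_K) : {set 'I_K} :=
  [set k | a <= z ord0 k].

Definition preserved_by (P : {set 'I_K}) (z : 'rV[R]_K) : Prop :=
  forall k, (k \in P -> a <= z ord0 k <= b) /\ (k \notin P -> z ord0 k = 0).

Definition perturbed (P : {set 'I_K}) (z eps : 'rV[R]_K) : 'rV[R]_K :=
  \row_k (if k \in P then Num.min b (Num.max a (z ord0 k + eps ord0 k)) else 0).

Definition robust (theta : 'rV[R]_K -> 'rV[R]_D) (U : R) (P : {set 'I_K})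
  (alpha : 'I_K -> R) : Prop :=
  forall z eps : 'rV[R]_K, preserved_by P z ->
    (forall k, k \in P -> - alpha k <= eps ord0 k <= alpha k) ->
    enorm (theta z - theta (perturbed P z eps)) <= U.

Definition Qnum (alpha : R) : nat := (Num.truncn ((b - a) / (2 * alpha))).+1.

Definition rep_set_size (P : {set 'I_K}) (alpha : 'I_K -> R) : nat :=
  (\prod_(k in P) Qnum (alpha k))%N.

Definition qualified (theta : 'rV[R]_K -> 'rV[R]_D) (U : R) (P : {set 'I_K})
  (alpha : 'I_K -> R) : Prop :=
  (forall k, k \in P -> 0 < alpha k) /\ robust theta U P alpha.

(* U-complexity; +oo when no U-qualified boundaries exist *)
Definition complexity (theta : 'rV[R]_K -> 'rV[R]_D) (U : R) (P : {set 'I_K})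
  : \bar R :=
  ereal_inf [set ((rep_set_size P alpha)%:R)%:E | alpha in qualified theta U P].

(* the distribution P is represented by its set of possible samples *)
Definition ess_compatible (samples : set 'rV[R]_D)
  (phi_pre : 'rV[R]_D -> 'rV[R]_K) (theta : 'rV[R]_K -> 'rV[R]_D) (U' : R) : Prop :=
  forall x, samples x -> enorm (x - theta (encoder phi_pre x)) <= U'.

Definition patterns (samples : set 'rV[R]_D) (phi_pre : 'rV[R]_D -> 'rV[R]_K)
  : {set {set 'I_K}} :=
  [set Pm | `[< exists2 x, samples x & spiking_pattern (encoder phi_pre x) = Pm >]].

Definition MDL_dagger (samples : set 'rV[R]_D) (U : R) : \bar R :=
  ereal_inf [set log2e (\sum_(Pm in patterns samples vae.1) complexity vae.2 (U / 2) Pm)%E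
            | vae in [set vae : ('rV[R]_D -> 'rV[R]_K) * ('rV[R]_K -> 'rV[R]_D) |
                        ess_compatible samples vae.1 vae.2 (U / 2)]].

End SpectrumVAE.

(* U-essence: minimal cardinality of a finite set S covering the samples
   within distance U (+oo if none exists, which cannot happen for bounded data) *)
Definition essence (R : realType) (D : nat) (samples : set 'rV[R]_D) (U : R)
  : \bar R :=
  ereal_inf [set ((#|` S|)%fset%:R)%:E | S in
     [set S : {fset 'rV[R]_D} |
        forall x, samples x -> exists2 xh, xh \in S & enorm (x - xh) <= U]].

(* Main.v *)
Require Import Defs.
From HB Require Import structures.
From mathcomp Require Import all_boot all_order all_algebra.
From mathcomp Require Import finmap.
From mathcomp Require Import all_classical all_reals all_analysis.
From mathcomp Require Import ring lra.
Import Order.TTheory GRing.Theory Num.Theory.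
Local Open Scope classical_set_scope.
Local Open Scope ring_scope.

Section Aux.
Variable R : realType.

Lemma cs_aux (n : nat) (u v : 'I_n -> R) :
  \sum_i u i * v i <= Num.sqrt (\sum_i u i ^+ 2) * Num.sqrt (\sum_i v i ^+ 2).
Proof.
set A := \sum_i u i ^+ 2; set B := \sum_i v i ^+ 2.
have A0 : 0 <= A by apply: sumr_ge0 => i _; exact: sqr_ge0.
have B0 : 0 <= B by apply: sumr_ge0 => i _; exact: sqr_ge0.
have [Ae|Anz] := eqVneq A 0.
  have u0 i : u i = 0.
    apply/eqP; rewrite -sqrf_eq0; apply/eqP.
    by apply: (psumr_eq0P (P := predT) (F := fun i => u i ^+ 2)) => // j _; exact: sqr_ge0.
  rewrite big1 ?mulr_ge0 ?sqrtr_ge0 // => i _; by rewrite u0 mul0r.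
have [Be|Bnz] := eqVneq B 0.
  have v0 i : v i = 0.
    apply/eqP; rewrite -sqrf_eq0; apply/eqP.
    by apply: (psumr_eq0P (P := predT) (F := fun i => v i ^+ 2)) => // j _; exact: sqr_ge0.
  rewrite big1 ?mulr_ge0 ?sqrtr_ge0 // => i _; by rewrite v0 mulr0.
set sa := Num.sqrt A; set sb := Num.sqrt B.
have sa0 : 0 < sa by rewrite sqrtr_gt0 lt0r Anz.
have sb0 : 0 < sb by rewrite sqrtr_gt0 lt0r Bnz.
have saa : sa ^+ 2 = A by rewrite sqr_sqrtr.
have sbb : sb ^+ 2 = B by rewrite sqr_sqrtr.
have key : (\sum_i u i * v i) * (2 * sa * sb) <= sa * sb * (2 * sa * sb).
  have -> : sa * sb * (2 * sa * sb) = sb ^+ 2 * A + sa ^+ 2 * B.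
    by rewrite -saa -sbb; ring.
  rewrite mulr_suml /A /B !mulr_sumr -big_split /=.
  apply: ler_sum => i _.
  have := sqr_ge0 (sb * u i - sa * v i); nra.
have hp : 0 < 2 * sa * sb by rewrite !mulr_gt0.
by move: key; rewrite (ler_pM2r hp).
Qed.

Lemma enorm_triangle n (u v : 'rV[R]_n) : enorm (u + v) <= enorm u + enorm v.
Proof.
rewrite /enorm.
have H := cs_aux n (fun i => u ord0 i) (fun i => v ord0 i).
set A := \sum_i u ord0 i ^+ 2 in H *; set B := \sum_i v ord0 i ^+ 2 in H *.
have A0 : 0 <= A by apply: sumr_ge0 => i _; exact: sqr_ge0.
have B0 : 0 <= B by apply: sumr_ge0 => i _; exact: sqr_ge0.
have -> : Num.sqrt A + Num.sqrt B = Num.sqrt ((Num.sqrt A + Num.sqrt B) ^+ 2).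
  by rewrite sqrtr_sqr ger0_norm // addr_ge0 ?sqrtr_ge0.
rewrite ler_sqrt; last exact: sqr_ge0.
have -> : \sum_i (u + v) ord0 i ^+ 2 = A + 2 * \sum_i u ord0 i * v ord0 i + B.
  rewrite /A /B mulr_sumr -!big_split /=; apply: eq_bigr => i _.
  rewrite mxE; ring.
rewrite sqrrD !sqr_sqrtr //.
have := H; lra.
Qed.
End Aux.
Arguments enorm_triangle {R} n u v.

Section Aux2.
Variable R : realType.

Lemma inf_nat_attained (T : Type) (S : set T) (f : T -> nat) :
  S !=set0 -> exists2 t, S t &
    ereal_inf [set ((f t)%:R)%:E | t in S] = ((f t)%:R)%:E :> \bar R.
Proof.
move=> [t0 St0].
have ex : exists n, (fun n => `[< exists2 t, S t & f t = n >]) n.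
  by exists (f t0); apply/asboolP; exists t0.
case: (ex_minnP ex) => m /asboolP [t St ftm] Hmin.
exists t => //; apply/le_anti/andP; split.
  by apply: ereal_inf_lbound; exists t.
apply: le_ereal_inf_tmp => _ [t' St' <-].
rewrite lee_fin ler_nat ftm; apply: Hmin; apply/asboolP; by exists t'.
Qed.

Lemma log2e_le (x y : \bar R) : (0 <= x)%E -> (x <= y)%E -> (log2e x <= log2e y)%E.
Proof.
case: x => [r| |] //; case: y => [s| |] //= r0 rs; last by rewrite leey.
rewrite lee_fin in r0 rs.
case: ifP => [_|]; first by rewrite leNye.
move/negbT; rewrite -ltNge => r0'.
have s0 : 0 < s := lt_le_trans r0' rs.
have -> : (s <= 0) = false by rewrite leNgt s0.
rewrite lee_fin ler_pM2r ?invr_gt0 ?ln_gt0 ?ltr1n //.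
by rewrite ler_ln // posrE.
Qed.

Lemma quant_exists (Q : nat) (t : R) : (0 < Q)%N -> 0 <= t <= Q%:R ->
  exists2 m : nat, (m < Q)%N & m%:R <= t <= m%:R + 1.
Proof.
move=> Q0 /andP[t0 tQ].
case: (ltnP (Num.truncn t) Q) => H.
  exists (Num.truncn t) => //.
  have /andP[h1 h2] := truncn_itv t0.
  by rewrite h1 /= natr1 ltW.
have : Q%:R <= t.
  apply: le_trans (_ : (Num.truncn t)%:R <= t); first by rewrite ler_nat.
  by have /andP[] := truncn_itv t0.
move=> Qt; exists Q.-1; first by rewrite prednK // leqnn. 
have -> : t = Q%:R by apply/le_anti; rewrite tQ Qt.
rewrite natr1 prednK // lexx andbT ler_nat.
exact: leq_pred.
Qed.
End Aux2.
Arguments inf_nat_attained {R} T S f.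
Arguments log2e_le {R} x y.

Definition qval {R : realType} (a b : R) (Q m : nat) : R :=
  a + (2 * m%:R + 1) * ((b - a) / (2 * Q%:R)).

Lemma coord_approx (R : realType) (a b al zk : R) : a < b -> 0 < al -> a <= zk <= b ->
  exists2 m : nat, (m < Qnum a b al)%N &
    a <= qval a b (Qnum a b al) m <= b /\ `|qval a b (Qnum a b al) m - zk| <= al.
Proof.
move=> ab al0 /andP[azk zkb].
set Q := Qnum a b al.
have Q0 : (0 < Q)%N by [].
have Qr : 0 < Q%:R :> R by rewrite ltr0n.
have QB : (b - a) / (2 * al) < Q%:R by exact: truncnS_gt.
set w := (b - a) / Q%:R.
have wQ : w * Q%:R = b - a by rewrite /w mulfVK // gt_eqF.
have w0 : 0 < w by rewrite /w divr_gt0 // subr_gt0.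
have w2al : w < 2 * al.
  rewrite -(ltr_pM2r Qr) wQ.
  by rewrite ltr_pdivrMr ?mulr_gt0 // mulrC in QB.
set t := (zk - a) / w.
have tw : t * w = zk - a by rewrite /t mulfVK // gt_eqF.
have t0 : 0 <= t by rewrite /t divr_ge0 // ?subr_ge0 // ltW.
have tQ : t <= Q%:R.
  rewrite /t ler_pdivrMr // mulrC wQ; lra.
have tI : 0 <= t <= Q%:R by rewrite t0 tQ.
have [m mQ /andP[mt tm]] := @quant_exists R Q t Q0 tI.
exists m => //.
have qe : qval a b Q m = a + (m%:R + 2^-1) * w.
  rewrite /qval /w; field; rewrite gt_eqF //.
have mQr : m%:R + 1 <= Q%:R :> R by rewrite natr1 ler_nat.
have m0 : 0 <= m%:R :> R by [].
rewrite qe; split.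
  apply/andP; split; first by rewrite lerDl mulr_ge0 // ?ltW // addr_ge0.
  have h : (m%:R + 2^-1) * w <= Q%:R * w by rewrite ler_pM2r //; lra.
  lra.
have -> : a + (m%:R + 2^-1) * w - zk = (m%:R + 2^-1 - t) * w.
  by rewrite mulrBl tw; ring.
rewrite normrM (gtr0_norm w0).
apply: le_trans (_ : 2^-1 * w <= al); last lra.
rewrite ler_pM2r // ler_norml; apply/andP; split; lra.
Qed.

Section Quant.
Variables (R : realType) (D K : nat) (a b : R).

Definition qn (P : {set 'I_K}) (al : 'I_K -> R) (k : 'I_K) : nat :=
  if k \in P then Qnum a b (al k) else 1%N.

Definition qtype (P : {set 'I_K}) (al : 'I_K -> R) : finType :=
  {dffun forall k : 'I_K, 'I_(qn P al k)}.

Definition quant (P : {set 'I_K}) (al : 'I_K -> R) (c : qtype P al) : 'rV[R]_K :=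
  \row_k (if k \in P then qval a b (Qnum a b (al k)) (c k) else 0).

Lemma card_qtype P al : #|qtype P al| = rep_set_size a b P al.
Proof.
rewrite /qtype card_dep_ffun /rep_set_size.
have -> : forall (s : seq 'I_K),
    foldr muln 1%N [seq #|'I_(qn P al x)| | x <- s] = (\prod_(x <- s) qn P al x)%N.
  by elim => [|x s IH]; rewrite ?big_nil ?big_cons //= IH card_ord.
rewrite big_enum /= [RHS]big_mkcond /=; apply: eq_bigr => k _.
by rewrite /qn; case: ifP.
Qed.

Lemma cover_lemma (theta : 'rV[R]_K -> 'rV[R]_D) (U : R) P al z :
  a < b -> qualified a b theta U P al -> preserved_by a b P z ->
  exists c : qtype P al, enorm (theta z - theta (quant P al c)) <= U.
Proof.
move=> ab [alpos rob] pz.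
have hm : forall k, exists m : nat,
   (m < qn P al k)%N /\ (k \in P -> a <= qval a b (Qnum a b (al k)) m <= b /\
          `|qval a b (Qnum a b (al k)) m - z ord0 k| <= al k).
  move=> k; case kP: (k \in P).
    have [m mQ H] := @coord_approx R a b (al k) (z ord0 k) ab (alpos k kP) (proj1 (pz k) kP).
    by exists m; rewrite /qn kP.
  by exists 0%N; rewrite /qn kP.
have [mf Hmf] := choice hm.
pose c : qtype P al := finfun (fun k => Ordinal (proj1 (Hmf k))).
exists c.
have cE k : (c k : nat) = mf k by rewrite /c ffunE.
have -> : quant P al c = perturbed a b P z (quant P al c - z).
  apply/rowP => k; rewrite !mxE; case kP: (k \in P) => //.
  have [/andP[h1 h2] _] := proj2 (Hmf k) kP.
  rewrite cE addrCA subrr addr0 max_r ?min_r //.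
apply: rob => // k kP; rewrite !mxE kP cE -ler_norml.
exact: (proj2 (proj2 (Hmf k) kP)).
Qed.
Lemma enc_preserved (phi : 'rV[R]_D -> 'rV[R]_K) x : 0 < a -> a <= b ->
  preserved_by a b (spiking_pattern a (encoder a b phi x)) (encoder a b phi x).
Proof.
move=> a0 ab k; rewrite inE /encoder /spectrum_of !mxE /clamp_coord.
case: ifPn => h1; [|case: ifPn => h2]; split => // H; try lra.
Qed.
End Quant.
Arguments qn {R K} a b P al k.
Arguments qtype {R K} a b P al.
Arguments quant {R K} a b P al c.

Theorem theorem1 (R : realType) (D K : nat) (samples : set 'rV[R]_D)
  (lam mu : R)
  (Hbox : forall x, samples x -> forall d : 'I_D, lam <= x ord0 d <= mu)
  (U : R) (HU : 0 < U) (a b : R) (Ha : 0 < a) (Hab : a < b) :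
  (log2e (essence samples U) <= MDL_dagger K a b samples U)%E.
Proof.
apply: le_ereal_inf_tmp => _ [[phi theta] /= Hc <-].
set pats := patterns a b samples phi.
have ess0 : (0 <= essence samples U)%E.
  by apply: le_ereal_inf_tmp => _ [S _ <-]; rewrite lee_fin.
case: (pselect (forall Pm, Pm \in pats -> exists al, qualified a b theta (U/2) Pm al)); last first.
  move=> Hn; have [Pm /not_implyP [Pin Hno0]] := iffRL (existsNP _) Hn.
  have Hno := iffRL (forallNP _) Hno0.
  have -> : (\sum_(Pm0 in pats) complexity a b theta (U / 2) Pm0)%E = +oo%E.
    rewrite (bigD1 Pm) //=.
    have -> : complexity a b theta (U / 2) Pm = +oo%E.
      by apply/ereal_inf_pinfty => y [al qal _]; case: (Hno al qal).
    rewrite addye //.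
    set s := (\sum_(_ | _) _)%E.
    have : (0 <= s)%E.
      apply: sume_ge0 => i _; apply: le_ereal_inf_tmp => _ [al _ <-].
      by rewrite lee_fin.
    by case: s.
  by rewrite leey.
move=> Hall.
have hch : forall Pm, exists al, Pm \in pats -> qualified a b theta (U/2) Pm al /\
   complexity a b theta (U / 2) Pm = ((rep_set_size a b Pm al)%:R)%:E.
  move=> Pm; case: (boolP (Pm \in pats)) => Pin; last by exists (fun=> 0).
  have [al0 q0] := Hall Pm Pin.
  have [al qal Heq] := @inf_nat_attained R _ (qualified a b theta (U/2) Pm)
      (rep_set_size a b Pm) (ex_intro _ al0 q0).
  by exists al => _; split.
have [alF HalF] := choice hch.
set N := (\sum_(Pm in pats) rep_set_size a b Pm (alF Pm))%N.
have -> : (\sum_(Pm in pats) complexity a b theta (U / 2) Pm)%E = (N%:R)%:E.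
  rewrite /N natr_sum -sumEFin; apply: eq_bigr => Pm Pin.
  by case: (HalF Pm Pin).
apply: log2e_le => //.
pose pts := flatten [seq [seq theta (quant a b Pm (alF Pm) c) | c <- enum (qtype a b Pm (alF Pm))]
                    | Pm <- enum pats].
pose S := [fset x in pts]%fset.
apply: (@le_trans _ _ (((#|` S|)%fset)%:R)%:E).
  apply: ereal_inf_lbound; exists S => // x sx.
  set z := encoder a b phi x.
  set Pm := spiking_pattern a z.
  have Pin : Pm \in pats.
    by rewrite inE; apply/asboolP; exists x.
  have [qal _] := HalF Pm Pin.
  have [c Hcv] := @cover_lemma R D K a b theta (U/2) Pm (alF Pm) z Hab qal (@enc_preserved R D K a b phi x Ha (ltW Hab)).
  exists (theta (quant a b Pm (alF Pm) c)).
    rewrite inE /= /pts; apply/flattenP.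
    exists [seq theta (quant a b Pm (alF Pm) c) | c <- enum (qtype a b Pm (alF Pm))].
      by apply/mapP; exists Pm; rewrite ?mem_enum.
    by apply/mapP; exists c; rewrite ?mem_enum.
  have -> : x - theta (quant a b Pm (alF Pm) c) =
      (x - theta z) + (theta z - theta (quant a b Pm (alF Pm) c)) by rewrite addrA subrK.
  apply: (le_trans (enorm_triangle _ _ _)).
  have := Hc x sx; rewrite /= -/z => h1.
  lra.
rewrite lee_fin ler_nat card_fseq.
apply: leq_trans (size_undup _) _.
rewrite /pts size_flatten /shape -map_comp sumnE big_map big_enum /N /=.
apply: leq_sum => Pm _; by rewrite size_map -cardE card_qtype.
Qed.
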